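(* For every model $\rho$, every $n \geq 1$, $\phi$, $\phi_1$ and $\phi_2$, and every $1 < i \leq |\rho|$, the following hold: 1. $(\rho, i) \models \phi_1 \mathrel{\mathbb{S}}_n \phi_2$ iff $(\rho, i) \models \phi_2$, or $(\rho, i) \models \phi_1$ and $(\rho, i-1) \models \phi_1 \mathrel{\mathbb{S}}_n \phi_2$ and $n - (\tau_i - \tau_{i-1}) \geq \mathfrak{m}(\rho, i-1, \phi_1 \mathrel{\mathbb{S}}_n \phi_2).$ 2. $(\rho, i) \models \mathsf{P}^{<}_n \phi$ iff $(\rho, i - 1) \models \phi$ and $\tau_i - \tau_{i-1} < n$, or $(\rho, i-1) \models \mathsf{P}^{<}_n \phi$ and $n - (\tau_i - \tau_{i-1}) \geq \mathfrak{m}(\rho, i-1, \mathsf{P}^{<}_n \phi).$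
   Context: A model is $\rho=(\pi,\tau)$ with $\pi$ a finite sequence of states and $\tau$ a non-decreasing sequence of natural-number timestamps, $|\pi|=|\tau|=|\rho|$. Semantics: $(\rho,i)\models\mathsf{P}^{<}_n\phi$ (strict metric past ''once'') iff $i>1$ and there is $j<i$ with $(\rho,j)\models\phi$ and $\tau_i-\tau_j<n$; $(\rho,i)\models\phi_1\mathrel{\mathbb{S}}_n\phi_2$ iff there is $j\le i$ with $(\rho,j)\models\phi_2$, $(\rho,k)\models\phi_1$ for all $j<k\le i$, and $\tau_i-\tau_j<n$. It is known (minimality) that if $(\rho,i)\models\phi_1\mathrel{\mathbb{S}}_n\phi_2$ (resp. $\mathsf{P}^{<}_n\phi$) then there is a least $m\le n$ such that $(\rho,i)\models\phi_1\mathrel{\mathbb{S}}_m\phi_2$ (resp. $\mathsf{P}^{<}_m\phi$), i.e. it fails for every $0<k<m$. The function $\mathfrak{m}(\rho,i,\psi)$ equals this least $m$ if $\psi$ is of the form $\phi_1\mathrel{\mathbb{S}}_n\phi_2$ or $\mathsf{P}^{<}_n\phi'$ and $(\rho,i)\models\psi$, and $0$ otherwise. *)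

(* Defs.v *)
From mathcomp Require Import all_boot all_order all_algebra.
Set Implicit Arguments. Unset Strict Implicit. Unset Printing Implicit Defensive.

(* A model rho = (pi, tau): a finite sequence of states and a non-decreasing
   sequence of natural-number timestamps of the same length.
   Positions are 1-indexed: position i refers to nth _ pi (i-1). *)
Record model (S : Type) := Model {
  mstates : seq S;
  mstamps : seq nat;
  size_pi_tau : size mstates = size mstamps;
  tau_nondecr : sorted leq mstamps }.

Definition ts (S : Type) (rho : model S) (i : nat) : nat := nth 0 (mstamps rho) i.-1.

Inductive mformula (S : Type) :=
| FTrue
| Atom of pred S
| Neg of mformula S
| And of mformula S & mformula S
| Since of nat & mformula S & mformula S
| Once of nat & mformula S.

Arguments FTrue {S}.

Fixpoint sat (S : Type) (rho : model S) (f : mformula S) (i : nat) : bool :=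
  match f with
  | FTrue => true
  | Atom p => if mstates rho is x0 :: _ then p (nth x0 (mstates rho) i.-1) else false
  | Neg g => ~~ sat rho g i
  | And g h => sat rho g i && sat rho h i
  | Since n f1 f2 =>
      has (fun j => [&& sat rho f2 j,
                        all (fun k => sat rho f1 k) (iota j.+1 (i - j))
                      & ts rho i - ts rho j < n]) (iota 1 i)
  | Once n g =>
      (1 < i) && has (fun j => sat rho g j && (ts rho i - ts rho j < n))
                     (iota 1 i.-1)
  end.

(* The minimality function m(rho, i, psi): the least m such that
   (rho,i) |= psi with its bound replaced by m, when psi is a Since/Once
   formula satisfied at i; 0 otherwise.  (find over iota 0 (n+1) returns the
   least such m, which is <= n by minimality.) *)
Definition mfun (S : Type) (rho : model S) (i : nat) (psi : mformula S) : nat :=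
  match psi with
  | Since n f1 f2 =>
      if sat rho psi i then find (fun m => sat rho (Since m f1 f2) i) (iota 0 n.+1)
      else 0
  | Once n g =>
      if sat rho psi i then find (fun m => sat rho (Once m g) i) (iota 0 n.+1)
      else 0
  | _ => 0
  end.

(* Main.v *)
Require Import Defs.
From mathcomp Require Import all_boot all_order all_algebra.
From mathcomp Require Import zify.
Import Order.TTheory GRing.Theory Num.Theory.

Lemma ts_mono (S : Type) (rho : model S) j k :
  (1 <= j)%N -> (j <= k)%N -> (k <= size (mstates rho))%N -> (ts rho j <= ts rho k)%N.
Proof.
move=> j1 jk ks; rewrite /ts.
apply: (sorted_leq_nth leq_trans leqnn 0 (tau_nondecr rho)).
- rewrite inE -size_pi_tau; lia.
- rewrite inE -size_pi_tau; lia.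
- lia.
Qed.

Lemma sinceP (S : Type) (rho : model S) n f1 f2 i :
  sat rho (Since n f1 f2) i <-> exists j, [/\ (1 <= j <= i)%N, sat rho f2 j,
     (forall k, (j < k <= i)%N -> sat rho f1 k) & (ts rho i - ts rho j < n)%N].
Proof.
split => /=.
- case/hasP => j; rewrite mem_iota => ji /and3P [h2 /allP ha hts].
  exists j; split; [lia|done| |done].
  move=> k kr; apply: ha; rewrite mem_iota; lia.
- case=> j [ji h2 ha hts]; apply/hasP; exists j; first by rewrite mem_iota; lia.
  apply/and3P; split => //; apply/allP => k; rewrite mem_iota => kr; apply: ha; lia.
Qed.

Lemma onceP (S : Type) (rho : model S) n g i :
  sat rho (Once n g) i <-> exists j, [/\ (1 <= j < i)%N, sat rho g j
     & (ts rho i - ts rho j < n)%N].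
Proof.
split => /=.
- case/andP => i1 /hasP [j]; rewrite mem_iota => ji /andP [h hts].
  exists j; split; [lia|done|done].
- case=> j [ji h hts]; apply/andP; split; first lia.
  apply/hasP; exists j; first by rewrite mem_iota; lia.
  by apply/andP.
Qed.

Lemma find_le (W : pred nat) N k : (k <= N)%N ->
  (find W (iota 0 N.+1) <= k)%N <-> exists m, (m <= k)%N /\ W m.
Proof.
move=> kN.
have -> : iota 0 N.+1 = iota 0 k.+1 ++ iota k.+1 (N - k).
  by rewrite -iotaD; congr iota; lia.
rewrite find_cat; case: ifP => hW.
- split => [_|]; last by move=> _; move: hW; rewrite has_find size_iota.
  case/hasP: hW => m; rewrite mem_iota => mk Wm; exists m; split => //; lia.
- rewrite size_iota; split => [|[m [mk Wm]]]; first lia.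
  by move/negbT: hW => /hasPn /(_ m); rewrite mem_iota Wm; lia.
Qed.

Lemma intcond (M n d : nat) :
  ((M%:Z <= n%:Z - d%:Z)%R) <-> (M + d <= n)%N.
Proof. split; lia. Qed.

Theorem theorem1 (St : Type) (rho : model St) (n : nat) (phi phi1 phi2 : mformula St)
    (i : nat) :
  (1 <= n)%N -> (1 < i)%N -> (i <= size (mstates rho))%N ->
  (sat rho (Since n phi1 phi2) i <->
     sat rho phi2 i \/
     [/\ sat rho phi1 i, sat rho (Since n phi1 phi2) i.-1
       & ((mfun rho i.-1 (Since n phi1 phi2))%:Z
            <= n%:Z - (ts rho i - ts rho i.-1)%:Z)%R])
  /\
  (sat rho (Once n phi) i <->
     (sat rho phi i.-1 /\ (ts rho i - ts rho i.-1 < n)%N) \/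
     (sat rho (Once n phi) i.-1 /\
      ((mfun rho i.-1 (Once n phi))%:Z
            <= n%:Z - (ts rho i - ts rho i.-1)%:Z)%R)).
Proof.
move=> n1 i1 isz.
have tsm : forall j k, (1 <= j)%N -> (j <= k)%N -> (k <= i)%N -> (ts rho j <= ts rho k)%N.
  by move=> j k ? ? ?; apply: ts_mono => //; lia.
have tsi := tsm i.-1 i ltac:(lia) ltac:(lia) (leqnn i).
split.
- rewrite /mfun; split.
  + case/sinceP => j [ji h2 ha hts].
    have [ej|jne] := eqVneq j i; first by left; rewrite -ej.
    right.
    have hj1 := tsm j i.-1 ltac:(lia) ltac:(lia) ltac:(lia).
    have hs : sat rho (Since n phi1 phi2) i.-1.
      apply/sinceP; exists j; split => //; first lia.
        by move=> k kr; apply: ha; lia.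
      lia.
    split => //; first by apply: ha; lia.
    rewrite hs intcond.
    suff : (find (fun m => sat rho (Since m phi1 phi2) i.-1) (iota 0 n.+1)
              <= n - (ts rho i - ts rho i.-1))%N by lia.
    apply/find_le; first lia.
    exists (n - (ts rho i - ts rho i.-1)); split => //.
    apply/sinceP; exists j; split => //; first lia.
      by move=> k kr; apply: ha; lia.
    lia.
  + case => [h2|[h1 hs]].
      apply/sinceP; exists i; split => //; first lia.
        by move=> k; lia.
      rewrite subnn; lia.
    rewrite hs intcond => hc.
    have /find_le : (find (fun m => sat rho (Since m phi1 phi2) i.-1) (iota 0 n.+1)
              <= n - (ts rho i - ts rho i.-1))%N by lia.
    case; first lia.
    move=> m [mk /sinceP [j [ji h2 ha hts]]].
    have hj1 := tsm j i.-1 ltac:(lia) ltac:(lia) ltac:(lia).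
    apply/sinceP; exists j; split => //; first lia.
      move=> k kr; have [ek|kne] := eqVneq k i; first by rewrite ek.
      by apply: ha; lia.
    lia.
- rewrite /mfun; split.
  + case/onceP => j [ji h hts].
    have [ej|jne] := eqVneq j i.-1.
      by left; rewrite -ej; split.
    right.
    have hj1 := tsm j i.-1 ltac:(lia) ltac:(lia) ltac:(lia).
    have hs : sat rho (Once n phi) i.-1.
      by apply/onceP; exists j; split => //; lia.
    split => //.
    rewrite hs intcond.
    suff : (find (fun m => sat rho (Once m phi) i.-1) (iota 0 n.+1)
              <= n - (ts rho i - ts rho i.-1))%N by lia.
    apply/find_le; first lia.
    exists (n - (ts rho i - ts rho i.-1)); split => //.
    by apply/onceP; exists j; split => //; lia.
  + case => [[h hd]|[hs]].
      by apply/onceP; exists i.-1; split => //; lia.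
    rewrite hs intcond => hc.
    have /find_le : (find (fun m => sat rho (Once m phi) i.-1) (iota 0 n.+1)
              <= n - (ts rho i - ts rho i.-1))%N by lia.
    case; first lia.
    move=> m [mk /onceP [j [ji h hts]]].
    have hj1 := tsm j i.-1 ltac:(lia) ltac:(lia) ltac:(lia).
    by apply/onceP; exists j; split => //; lia.
Qed.
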